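(* Let $l\in\{1,2,3\}$ and $\lambda_0>0$. Let the base stations be the points of a homogeneous Poisson point process in $\mathbb R^l$ with intensity $\lambda_0$, with a mobile station at the origin, all transmission powers and shadow fading factors equal to $1$. For an increasing path-loss function $h$, let $\left(\frac CI\right)_h=\frac{1/h(R_1)}{\sum_{i\ge2}1/h(R_i)}$, where $R_1\le R_2\le\cdots$ are the ordered distances of the base stations from the origin (received power at distance $R$ is $1/h(R)$). Let $h_i(r)=r^{\varepsilon_i}$, $i=1,2$, with $\varepsilon_1>\varepsilon_2>l$, and write $\left(\frac CI\right)_i=\left(\frac CI\right)_{h_i}$. Then $\left(\frac CI\right)_1\ge_{\mathrm{st}}\left(\frac CI\right)_2$.
   Context: The mobile is served by the BS with strongest received power (the nearest one) and all other BSs interfere. For random variables $X,Y$, $X\ge_{\mathrm{st}}Y$ means $\mathbb P(X>x)\ge\mathbb P(Y>x)$ for all real $x$. *)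

(* Defs.v *)
From mathcomp Require Import all_boot all_order all_algebra.
From mathcomp Require Import all_classical all_reals all_analysis.
Import Order.TTheory GRing.Theory Num.Theory.
Local Open Scope classical_set_scope.
Local Open Scope ring_scope.

Section defs.
Context {R : realType}.

Definition eucl_norm {l : nat} (x : 'rV[R]_l) : R :=
  Num.sqrt (\sum_(j < l) x ord0 j ^+ 2).

Definition in_box {l : nat} (a b x : 'rV[R]_l) : Prop :=
  forall j, a ord0 j < x ord0 j <= b ord0 j.

Definition box_vol {l : nat} (a b : 'rV[R]_l) : R :=
  \prod_(j < l) (b ord0 j - a ord0 j).

Definition count_in {T : Type} {l : nat} (X : nat -> T -> 'rV[R]_l)
    (a b : 'rV[R]_l) (w : T) : \bar R :=
  (\sum_(i <oo) (if pselect (in_box a b (X i w)) then 1 else 0)%:E)%E.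

(* X is a homogeneous Poisson point process of intensity lam on R^l:
   the X i are random vectors and for every finite family of pairwise
   disjoint half-open boxes the counts are independent Poisson variables
   with means lam * volume (joint pmf factorizes). *)
Definition homogeneous_PPP {d} {Omega : measurableType d}
    (P : probability Omega R) {l : nat} (lam : R)
    (X : nat -> Omega -> 'rV[R]_l) : Prop :=
  (forall i (j : 'I_l), measurable_fun setT (fun w => X i w ord0 j)) /\
  forall (n : nat) (a b : 'I_n -> 'rV[R]_l) (m : 'I_n -> nat),
    (forall k j, a k ord0 j < b k ord0 j) ->
    (forall k k', k != k' -> forall x,
        in_box (a k) (b k) x -> in_box (a k') (b k') x -> False) ->
    P (\bigcap_(k in [set: 'I_n])
          [set w | count_in X (a k) (b k) w = ((m k)%:R)%:E])
    = (\prod_(k < n)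
         (expR (- (lam * box_vol (a k) (b k)))
          * (lam * box_vol (a k) (b k)) ^+ m k / ((m k)`!)%:R))%:E.

Definition sorted_by_distance {T : Type} {l : nat}
    (X : nat -> T -> 'rV[R]_l) : Prop :=
  forall w i, eucl_norm (X i w) <= eucl_norm (X i.+1 w).

(* (C/I)_h : power 1/h(R_1) of the nearest BS over the sum of the others.
   (X 0 is the nearest BS, i.e. R_1 = |X 0|.) *)
Definition CI {T : Type} {l : nat} (h : R -> R)
    (X : nat -> T -> 'rV[R]_l) (w : T) : R :=
  (h (eucl_norm (X 0%N w)))^-1 /
  fine (\sum_(i <oo) ((h (eucl_norm (X i.+1 w)))^-1)%:E)%E.

Definition stoch_ge {d} {Omega : measurableType d}
    (P : probability Omega R) (Y Z : Omega -> R) : Prop :=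
  forall x : R, (P [set w | (x < Z w)%R] <= P [set w | (x < Y w)%R])%E.

End defs.

(* Main.v *)
Require Import Defs.
From mathcomp Require Import all_boot all_order all_algebra.
From mathcomp Require Import all_classical all_reals all_analysis.
From mathcomp Require Import ring measurable_realfun.
Import Order.TTheory GRing.Theory Num.Theory.
Local Open Scope ring_scope.

Lemma det (R : realType) (r : R) (Rs : nat -> R) (e1 e2 : R) :
  0 < e2 -> e2 < e1 -> 0 <= r -> (forall i, r <= Rs i) ->
  (r `^ e2)^-1 / fine (\sum_(i <oo) ((Rs i `^ e2)^-1)%:E)%E
  <= (r `^ e1)^-1 / fine (\sum_(i <oo) ((Rs i `^ e1)^-1)%:E)%E.
Proof.
move=> e20 e21 r0 rR.
have e10 : 0 < e1 by apply: lt_trans e21.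
have [->|rp] := eqVneq r 0.
  by rewrite !powR0 ?gt_eqF // invr0 !mul0r.
have rpos : 0 < r by rewrite lt_neqAle eq_sym rp r0.
have Rpos i : 0 < Rs i by apply: lt_le_trans (rR i).
set a1 := (r `^ e1)^-1; set a2 := (r `^ e2)^-1.
have A0 : 0 < r `^ e1 by apply: powR_gt0.
have B0 : 0 < r `^ e2 by apply: powR_gt0.
have a10 : 0 < a1 by rewrite invr_gt0.
have a20 : 0 < a2 by rewrite invr_gt0.
have term i : (((Rs i `^ e1)^-1)%:E <= (a1/a2)%:E * ((Rs i `^ e2)^-1)%:E)%E.
  rewrite -EFinM lee_fin /a1 /a2 invrK.
  have C0 : 0 < Rs i `^ e1 by apply: powR_gt0.
  have D0 : 0 < Rs i `^ e2 by apply: powR_gt0.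
  have key : r `^ e1 * Rs i `^ e2 <= r `^ e2 * Rs i `^ e1.
    have q0 : 0 <= Rs i / r by rewrite divr_ge0 // ltW.
    have q1 : 1 <= Rs i / r by rewrite ler_pdivlMr // mul1r.
    move: q0 q1; set q := Rs i / r => q0 q1.
    have hq : Rs i = r * q by rewrite /q; field; rewrite gt_eqF.
    clearbody q.
    rewrite hq.
    rewrite !powRM // ?(ltW rpos) // mulrCA ler_wpM2l ?mulr_ge0 ?powR_ge0 //.
    apply: ler_wpM2l; first exact: powR_ge0.
    by apply: ler_powR => //; exact: ltW.
  rewrite -subr_ge0.
  have -> : (r `^ e1)^-1 * r `^ e2 * (Rs i `^ e2)^-1 - (Rs i `^ e1)^-1
    = (r `^ e2 * Rs i `^ e1 - r `^ e1 * Rs i `^ e2)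
       / (r `^ e1 * Rs i `^ e2 * Rs i `^ e1).
    by field; rewrite !gt_eqF.
  by rewrite divr_ge0 ?subr_ge0 // ?mulr_ge0 // ltW.
have t0 e i : (0 <= ((Rs i `^ e)^-1)%:E)%E by rewrite lee_fin invr_ge0 powR_ge0.
set S2 := (\sum_(i <oo) _)%E; set S1 := (\sum_(i <oo) _)%E.
have S10 : (0 <= S1)%E by apply: nneseries_ge0 => n _ _; exact: t0.
have S20 : (0 <= S2)%E by apply: nneseries_ge0 => n _ _; exact: t0.
have S12 : (S1 <= (a1/a2)%:E * S2)%E.
  rewrite /S2 -nneseriesZl; last by move=> i _; exact: t0.
  by apply: lee_nneseries => [i _ _|i _]; [exact: t0|exact: term].
have first e : (((Rs 0%N `^ e)^-1)%:E <= \sum_(i <oo) ((Rs i `^ e)^-1)%:E)%E.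
  have := @nneseries_lim_ge R (fun i => ((Rs i `^ e)^-1)%:E) xpredT 0%N 1%N.
  rewrite big_nat1; apply => n _ _; exact: t0.
have [S2fin|S2inf] := boolP (S2 \is a fin_num); last first.
  have -> : S2 = +oo%E.
    by move: S2inf; rewrite ge0_fin_numE // -leNgt leye_eq => /eqP.
  rewrite /= invr0 mulr0 divr_ge0 ?fine_ge0 //; exact: ltW.
have S1fin : S1 \is a fin_num.
  rewrite ge0_fin_numE //; apply: (le_lt_trans S12).
  by rewrite -(fineK S2fin) -EFinM ltry.
have s10 : 0 < fine S1.
  rewrite -lte_fin fineK //; apply: (lt_le_trans _ (first e1)).
  by rewrite lte_fin invr_gt0 powR_gt0.
have s20 : 0 < fine S2.
  rewrite -lte_fin fineK //; apply: (lt_le_trans _ (first e2)).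
  by rewrite lte_fin invr_gt0 powR_gt0.
have s12 : fine S1 <= a1 / a2 * fine S2.
  by rewrite -lee_fin EFinM !fineK.
have key : a2 * fine S1 <= a1 * fine S2.
  have := ler_wpM2l (ltW a20) s12.
  by rewrite mulrA mulrCA divff ?gt_eqF // mulr1.
rewrite ler_pdivrMr // mulrAC ler_pdivlMr //.
Qed.

Lemma powR_invN (R : realType) (a e : R) : 0 <= a -> e != 0 ->
  (a `^ e)^-1 = a `^ (- e).
Proof.
move=> a0 e0; have [->|ap] := eqVneq a 0.
  by rewrite !powR0 ?invr0 // oppr_eq0.
by rewrite /powR (negbTE ap) mulNr expRN.
Qed.

Section main.
Local Open Scope classical_set_scope.
Context (R : realType) (d : measure_display) (Omega : measurableType d).

Lemma meas_CI l (X : nat -> Omega -> 'rV[R]_l) (e : R) :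
  (forall i (j : 'I_l), measurable_fun setT (fun w => X i w ord0 j)) ->
  0 < e -> measurable_fun setT (CI (fun r => r `^ e) X).
Proof.
move=> mX e0.
have mnorm i : measurable_fun setT (fun w => eucl_norm (X i w)).
  rewrite /eucl_norm.
  apply: (measurableT_comp (continuous_measurable_fun (@sqrt_continuous R))).
  by apply: measurable_sum => j; exact: measurable_funX (mX i j).
have en : e != 0 by rewrite gt_eqF.
have -> : CI (fun r => r `^ e) X = fun w =>
   (eucl_norm (X 0%N w)) `^ (- e) *
   (fine (\sum_(i <oo) ((eucl_norm (X i.+1 w)) `^ (- e))%:E)%E) `^ (-1).
  apply/funext => w; rewrite /CI powR_invN ?sqrtr_ge0 //.
  rewrite powR_inv1; last first.
    by apply: fine_ge0; apply: nneseries_ge0 => n _ _; rewrite lee_fin powR_ge0.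
  congr (_ * (fine _)^-1).
  by apply: eq_eseriesr => i _; rewrite powR_invN ?sqrtr_ge0.
apply: measurable_funM.
  exact: (measurableT_comp (measurable_powR _) (mnorm 0%N)).
apply: (measurableT_comp (measurable_powR _)).
apply: (measurableT_comp (fine_measurable measurableT)).
apply: (@ge0_emeasurable_sum _ _ _ setT _ xpredT).
  by move=> k w _ _; rewrite lee_fin powR_ge0.
move=> k _; apply/measurable_EFinP.
exact: (measurableT_comp (measurable_powR _) (mnorm k.+1)).
Qed.

Lemma meas_gt (F : Omega -> R) (x : R) : measurable_fun setT F ->
  measurable [set w | x < F w].
Proof.
move=> mF.
rewrite (_ : [set w | x < F w] = F @^-1` `]x, +oo[%classic); last first.
  by apply/seteqP; split=> w /=; rewrite in_itv /= andbT.
by rewrite -[X in measurable X]setTI; exact: mF.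
Qed.

End main.

Theorem corollary5 (R : realType) (d : measure_display)
    (Omega : measurableType d) (P : probability Omega R)
    (l : nat) (lam eps1 eps2 : R)
    (X : nat -> Omega -> 'rV[R]_l) :
  (1 <= l <= 3)%N -> 0 < lam ->
  homogeneous_PPP P lam X -> sorted_by_distance X ->
  l%:R < eps2 -> eps2 < eps1 ->
  stoch_ge P (CI (fun r => r `^ eps1) X) (CI (fun r => r `^ eps2) X).
Proof.
move=> hl lam0 [mX _] sorted e2l e21 x.
have e20 : 0 < eps2 by apply: le_lt_trans e2l.
have e10 : 0 < eps1 by apply: lt_trans e21.
apply: le_measure; rewrite ?inE.
- exact/meas_gt/meas_CI.
- exact/meas_gt/meas_CI.
move=> w /= h; apply: (lt_le_trans h).
apply: det => //; first exact: sqrtr_ge0.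
elim=> [|i IH]; first exact: sorted.
exact: le_trans IH (sorted _ _).
Qed.
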